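(* Let $\mathbf X=\{X_n\}$ and $\mathbf Y=\{Y_n\}$ be general sources such that $$\inf_{0<\epsilon<1}\ \liminf_{n\to\infty}\ \inf_{0\le\delta<1-\epsilon}\{c_n^x(\delta+\epsilon)-c_n^y(\delta)\}\ \ge 0 .$$ Then there exist joint pmfs $P_{X_nY_n}$ on $\mathcal X_n\times\mathcal Y_n$ with marginals $P_{X_n}$ and $P_{Y_n}$, for each $n$, such that for every $\gamma>0$ $$\lim_{n\to\infty}P_{X_nY_n}\Big\{\log\tfrac{1}{P_{X_n}(X_n)}-\log\tfrac{1}{P_{Y_n}(Y_n)}<-\gamma\Big\}=0 .$$ In other words, $\text{p-}\liminf_{n\to\infty}\{\log\frac{1}{P_{X_n}(X_n)}-\log\frac{1}{P_{Y_n}(Y_n)}\}\ge 0$ under $P_{X_nY_n}$.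
   Context: Logarithms are natural. A general source $\mathbf X=\{X_n\}_{n\ge1}$ is a sequence of random variables, $X_n$ taking values in a countable set $\mathcal X_n$, with no consistency requirements between different $n$. Similarly $Y_n$ takes values in a countable set $\mathcal Y_n$. For a random variable $Z$ on a countable set $\mathcal Z$ with pmf $P_Z$, list the elements of positive probability as $z_1,z_2,\dots$ (a finite or countably infinite list) with $P_Z(z_1)\ge P_Z(z_2)\ge\cdots$ (ties broken arbitrarily). Set $\delta_0=0$ and $\delta_k=\sum_{i\le k}P_Z(z_i)$. For $\delta\in[0,1)$ define $c^z(\delta)=\log\frac{1}{P_Z(z_k)}$, where $k$ is the unique index with $\delta\in[\delta_{k-1},\delta_k)$. Here $c_n^x$ and $c_n^y$ denote this function built from $P_{X_n}$ and from $P_{Y_n}$ respectively. *)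

(* Defs.v *)
From Stdlib Require Import Reals Lra ClassicalEpsilon.
Open Scope R_scope.

(* Alphabets: every countable set is encoded as (a subset of) nat;
   a pmf on a countable set is a nonnegative function nat -> R summing to 1. *)
Definition is_pmf (p : nat -> R) : Prop :=
  (forall x, 0 <= p x) /\ infinite_sum p 1.

(* Index range of a finite (Some m: indices 0..m-1) or infinite (None) list *)
Definition in_range (L : option nat) (k : nat) : Prop :=
  match L with None => True | Some m => (k < m)%nat end.

(* z (over range L) lists the elements of positive probability, each exactly once,
   in nonincreasing order of probability (ties broken arbitrarily).
   Indexing is 0-based: z 0 is the paper's z_1. *)
Definition sorted_listing (p : nat -> R) (L : option nat) (z : nat -> nat) : Prop :=
  (forall k, in_range L k -> 0 < p (z k)) /\
  (forall k k', in_range L k -> in_range L k' -> z k = z k' -> k = k') /\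
  (forall x, 0 < p x -> exists k, in_range L k /\ z k = x) /\
  (forall k, in_range L (S k) -> p (z (S k)) <= p (z k)).

Fixpoint psum (f : nat -> R) (k : nat) : R :=
  match k with O => 0 | S k' => psum f k' + f k' end.

(* v = c^z(delta): with delta_k = sum of the first k listed probabilities,
   v = log (1 / P(z_k)) for the unique k with delta in [delta_{k-1}, delta_k). *)
Definition c_val (p : nat -> R) (delta v : R) : Prop :=
  exists L z, sorted_listing p L z /\
    exists k, in_range L k /\
      psum (fun i => p (z i)) k <= delta < psum (fun i => p (z i)) (S k) /\
      v = ln (/ p (z k)).

(* c function (the value does not depend on tie breaking) *)
Definition cfun (p : nat -> R) (delta : R) : R :=
  epsilon (inhabits 0) (fun v => c_val p delta v).

Definition is_coupling (px py : nat -> R) (q : nat -> nat -> R) : Prop :=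
  (forall i j, 0 <= q i j) /\
  (forall i, infinite_sum (fun j => q i j) (px i)) /\
  (forall j, infinite_sum (fun i => q i j) (py j)).

Definition double_sum (f : nat -> nat -> R) (s : R) : Prop :=
  exists r : nat -> R,
    (forall i, infinite_sum (fun j => f i j) (r i)) /\ infinite_sum r s.

Definition event_prob (px py : nat -> R) (q : nat -> nat -> R) (gamma s : R) : Prop :=
  double_sum (fun i j =>
    if Rlt_dec (ln (/ px i) - ln (/ py j)) (- gamma) then q i j else 0) s.

(* Main.v *)
Require Import Defs.
From Stdlib Require Import Reals.
Open Scope R_scope.
From Stdlib Require Import Lra Lia List ClassicalEpsilon Classical ZArith.
Open Scope R_scope.


Fixpoint lsum (f : nat -> R) (l : list nat) : R :=
  match l with nil => 0 | x :: t => f x + lsum f t end.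

Lemma lsum_app f l1 l2 : lsum f (l1 ++ l2) = lsum f l1 + lsum f l2.
Proof. induction l1; simpl; [lra| rewrite IHl1; lra]. Qed.

Lemma lsum_nonneg f l : (forall x, 0 <= f x) -> 0 <= lsum f l.
Proof. intro H; induction l; simpl; [lra|]. specialize (H a); lra. Qed.

Lemma psum_lsum f N : psum f N = lsum f (seq 0 N).
Proof. induction N. reflexivity. rewrite seq_S, lsum_app. simpl. rewrite IHN. lra. Qed.

Lemma lsum_le F G (phi : nat -> nat) l1 : forall l2,
  NoDup l1 -> (forall x, 0 <= G x) ->
  (forall x, In x l1 -> F x <> 0 -> In (phi x) l2 /\ G (phi x) = F x) ->
  (forall x y, In x l1 -> In y l1 -> F x <> 0 -> F y <> 0 -> phi x = phi y -> x = y) ->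
  lsum F l1 <= lsum G l2.
Proof.
  induction l1 as [|a l1 IH]; intros l2 Hnd HG H1 H2; simpl.
  - apply lsum_nonneg; auto.
  - inversion Hnd as [|a' l1' Hna Hnd']; subst.
    destruct (Req_dec (F a) 0) as [Ha|Ha].
    + rewrite Ha. assert (lsum F l1 <= lsum G l2).
      { apply IH; auto. intros; apply H1; simpl; auto.
        intros; apply H2; simpl; auto. }
      lra.
    + destruct (H1 a (or_introl eq_refl) Ha) as [Hin Heq].
      destruct (in_split _ _ Hin) as [l2a [l2b E]]. rewrite E, lsum_app. simpl.
      assert (lsum F l1 <= lsum G (l2a ++ l2b)).
      { apply IH; auto.
        - intros x Hx Fx. destruct (H1 x (or_intror Hx) Fx) as [Hx2 Gx]. split; auto.
          rewrite E in Hx2. apply in_app_or in Hx2. apply in_or_app.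
          destruct Hx2 as [?|Hx2]; auto. destruct Hx2 as [Hx2|Hx2]; auto.
          exfalso. assert (x = a) by (apply H2; simpl; auto). subst; contradiction.
        - intros; apply H2; simpl; auto. }
      rewrite lsum_app in H. lra.
Qed.

Lemma list_bound (l : list nat) : exists M, forall x, In x l -> (x < M)%nat.
Proof.
  induction l as [|a l [M HM]]. exists 0%nat; intros x [].
  exists (S (Nat.max a M)). intros x [->|Hx]. lia. specialize (HM x Hx). lia.
Qed.

Lemma sum_f_R0_psum f n : sum_f_R0 f n = psum f (S n).
Proof. induction n; simpl. lra. simpl in IHn. rewrite IHn. reflexivity. Qed.

Lemma psum_mono f N M : (forall i, 0 <= f i) -> (N <= M)%nat -> psum f N <= psum f M.
Proof. intros H Hle. induction Hle. lra. simpl. specialize (H m). lra. Qed.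

Lemma psum_nonneg f N : (forall i, 0 <= f i) -> 0 <= psum f N.
Proof. intros. apply (psum_mono f 0 N); auto; lia. Qed.

Lemma inf_sum_psum_le f s : (forall i, 0 <= f i) -> infinite_sum f s -> forall N, psum f N <= s.
Proof.
  intros Hf Hs N. destruct (Rle_dec (psum f N) s) as [?|Hn]; auto. exfalso.
  destruct (Hs (psum f N - s)) as [N0 HN0]. lra.
  specialize (HN0 (Nat.max N N0) ltac:(lia)). rewrite sum_f_R0_psum in HN0.
  assert (psum f N <= psum f (S (Nat.max N N0))) by (apply psum_mono; auto; lia).
  unfold R_dist, Rabs in HN0. destruct Rcase_abs; lra.
Qed.

Lemma inf_sum_approx f s : infinite_sum f s -> forall e, 0 < e -> exists N, psum f N > s - e.
Proof.
  intros Hs e He. destruct (Hs e He) as [N HN]. exists (S N).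
  specialize (HN N (le_n _)). rewrite sum_f_R0_psum in HN.
  unfold R_dist, Rabs in HN. destruct Rcase_abs; lra.
Qed.

Lemma inf_sum_from g s : (forall i, 0 <= g i) -> (forall N, psum g N <= s) ->
  (forall e, 0 < e -> exists N, psum g N > s - e) -> infinite_sum g s.
Proof.
  intros Hg Hb Ha e He. destruct (Ha e He) as [N HN]. exists N. intros n Hn.
  rewrite sum_f_R0_psum. assert (psum g N <= psum g (S n)) by (apply psum_mono; auto).
  specialize (Hb (S n)). unfold R_dist, Rabs. destruct Rcase_abs; lra.
Qed.

Lemma exists_sum g S0 : (forall i, 0 <= g i) -> (forall N, psum g N <= S0) ->
  exists s, infinite_sum g s /\ s <= S0.
Proof.
  intros Hg Hb. destruct (growing_cv (sum_f_R0 g)) as [l Hl].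
  - intro n. simpl. specialize (Hg (S n)). lra.
  - exists S0. intros x [n ->]. rewrite sum_f_R0_psum. auto.
  - exists l. split. exact Hl. destruct (Rle_dec l S0) as [?|Hn]; auto.
    destruct (Hl (l - S0)) as [N HN]. lra. specialize (HN N (le_n _)).
    rewrite sum_f_R0_psum in HN. specialize (Hb (S N)).
    unfold R_dist, Rabs in HN. destruct Rcase_abs; lra.
Qed.

Lemma sum_transfer f g s : (forall i, 0 <= f i) -> (forall i, 0 <= g i) ->
  (forall N, exists M, psum g N <= psum f M) -> (forall M, exists N, psum f M <= psum g N) ->
  infinite_sum f s -> infinite_sum g s.
Proof.
  intros Hf Hg D1 D2 Hs. apply inf_sum_from; auto.
  - intro N. destruct (D1 N) as [M HM]. pose proof (inf_sum_psum_le f s Hf Hs M). lra.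
  - intros e He. destruct (inf_sum_approx f s Hs e He) as [M HM].
    destruct (D2 M) as [N HN]. exists N. lra.
Qed.


Definition inr_b (L : option nat) (k : nat) : bool :=
  match L with None => true | Some m => Nat.ltb k m end.

Lemma inr_b_spec L k : inr_b L k = true <-> in_range L k.
Proof. destruct L; simpl. apply Nat.ltb_lt. tauto. Qed.

Lemma inr_b_false L k : inr_b L k = false -> ~ in_range L k.
Proof. intros H H'. apply inr_b_spec in H'. congruence. Qed.

Lemma in_range_down L k i : in_range L k -> (i <= k)%nat -> in_range L i.
Proof. destruct L; simpl; auto; lia. Qed.

Definition relist (h : nat -> R) (L : option nat) (z : nat -> nat) (m : nat) : R :=
  if inr_b L m then h (z m) else 0.

Lemma relist_nonneg h L z m : (forall x, 0 <= h x) -> 0 <= relist h L z m.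
Proof. intros; unfold relist; destruct inr_b; auto; lra. Qed.

Definition inj_on (L : option nat) (z : nat -> nat) :=
  forall k k', in_range L k -> in_range L k' -> z k = z k' -> k = k'.

Lemma dom1 h L z : (forall x, 0 <= h x) -> inj_on L z ->
  forall N, exists M, psum (relist h L z) N <= psum h M.
Proof.
  intros Hh Hinj N. destruct (list_bound (map z (seq 0 N))) as [M HM]. exists M.
  rewrite !psum_lsum. apply lsum_le with (phi := z).
  - apply seq_NoDup.
  - auto.
  - intros x Hx Hne. unfold relist in *. destruct (inr_b L x) eqn:E; [|contradiction].
    split; [|reflexivity]. apply in_seq. split; [lia|]. simpl. apply HM. apply in_map. auto.
  - intros x y _ _ Hx Hy Exy. unfold relist in *.
    destruct (inr_b L x) eqn:E1; [|contradiction]. destruct (inr_b L y) eqn:E2; [|contradiction].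
    apply Hinj; try apply inr_b_spec; auto.
Qed.

Definition surj_on (h : nat -> R) (L : option nat) (z : nat -> nat) :=
  forall b, h b <> 0 -> exists k, in_range L k /\ z k = b.

Lemma dom2 h L z : (forall x, 0 <= h x) -> surj_on h L z ->
  forall M, exists N, psum h M <= psum (relist h L z) N.
Proof.
  intros Hh Hs M.
  set (phi := fun b => epsilon (inhabits 0%nat) (fun k => in_range L k /\ z k = b)).
  assert (Hphi : forall b, h b <> 0 -> in_range L (phi b) /\ z (phi b) = b).
  { intros b Hb. unfold phi. apply (epsilon_spec (inhabits 0%nat) (fun k => in_range L k /\ z k = b)).
    apply Hs; auto. }
  destruct (list_bound (map phi (seq 0 M))) as [N HN]. exists N.
  rewrite !psum_lsum. apply lsum_le with (phi := phi).
  - apply seq_NoDup.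
  - intros; apply relist_nonneg; auto.
  - intros x Hx Hne. destruct (Hphi x Hne) as [H1 H2]. split.
    + apply in_seq. split; [lia|]. simpl. apply HN. apply in_map. auto.
    + unfold relist. apply inr_b_spec in H1. rewrite H1, H2. reflexivity.
  - intros x y _ _ Hx Hy Exy. destruct (Hphi x Hx) as [_ E1]. destruct (Hphi y Hy) as [_ E2].
    rewrite <- E1, <- E2, Exy. reflexivity.
Qed.

Lemma rearr1 h L z s : (forall x, 0 <= h x) -> inj_on L z -> surj_on h L z ->
  infinite_sum h s -> infinite_sum (relist h L z) s.
Proof.
  intros. apply sum_transfer with h; auto. intros; apply relist_nonneg; auto.
  apply dom1; auto. apply dom2; auto.
Qed.

Lemma rearr2 h L z s : (forall x, 0 <= h x) -> inj_on L z -> surj_on h L z ->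
  infinite_sum (relist h L z) s -> infinite_sum h s.
Proof.
  intros. apply sum_transfer with (relist h L z); auto. intros; apply relist_nonneg; auto.
  apply dom2; auto. apply dom1; auto.
Qed.


Lemma terms_small p : (forall x, 0 <= p x) -> infinite_sum p 1 ->
  forall t, 0 < t -> exists B, forall x, (B <= x)%nat -> p x < t.
Proof.
  intros Hp Hs t Ht. destruct (Hs (t/2)) as [N HN]. lra. exists (S N).
  intros x Hx. destruct x as [|y]. lia.
  pose proof (HN y ltac:(lia)). pose proof (HN (S y) ltac:(lia)).
  simpl in H0. unfold R_dist, Rabs in *. do 2 destruct Rcase_abs; lra.
Qed.

Lemma finite_max (C : nat -> Prop) (p : nat -> R) B :
  (exists x, (x < B)%nat /\ C x) ->
  exists x, (x < B)%nat /\ C x /\ forall y, (y < B)%nat -> C y -> p y <= p x.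
Proof.
  induction B as [|B IH]; intros [x0 [Hx0 Cx0]]. lia.
  destruct (classic (exists x, (x < B)%nat /\ C x)) as [Hex|Hnex].
  - destruct (IH Hex) as [x [Hx [Cx Hm]]].
    destruct (classic (C B)) as [CB|nCB].
    + destruct (Rle_dec (p B) (p x)).
      * exists x. repeat split; auto. intros y Hy Cy. destruct (Nat.eq_dec y B). subst; auto.
        apply Hm; auto; lia.
      * exists B. repeat split; auto. intros y Hy Cy. destruct (Nat.eq_dec y B). subst; lra.
        specialize (Hm y ltac:(lia) Cy). lra.
    + exists x. repeat split; auto. intros y Hy Cy. destruct (Nat.eq_dec y B). subst; contradiction.
      apply Hm; auto; lia.
  - assert (x0 = B). { destruct (Nat.eq_dec x0 B); auto. exfalso; apply Hnex; exists x0; split; auto; lia. }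
    subst. exists B. repeat split; auto. intros y Hy Cy. destruct (Nat.eq_dec y B). subst; lra.
    exfalso; apply Hnex; exists y; split; auto; lia.
Qed.

Definition cand (p : nat -> R) (l : list nat) (x : nat) := 0 < p x /\ ~ In x l.

Lemma max_cand p l : is_pmf p -> (exists x, cand p l x) ->
  exists x, cand p l x /\ forall y, cand p l y -> p y <= p x.
Proof.
  intros [Hp Hs] [x0 Hx0]. destruct (terms_small p Hp Hs (p x0)) as [B HB]. apply Hx0.
  destruct (finite_max (cand p l) p (Nat.max B (S x0))) as [x [Hx [Cx Hm]]].
  exists x0; split; auto; lia.
  exists x; split; auto. intros y Cy. destruct (Nat.lt_ge_cases y (Nat.max B (S x0))).
  apply Hm; auto. pose proof (HB y ltac:(lia)). pose proof (Hm x0 ltac:(lia) Hx0). lra.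
Qed.

Definition nextP p l (o : option nat) : Prop :=
  match o with
  | Some x => cand p l x /\ forall y, cand p l y -> p y <= p x
  | None => ~ exists x, cand p l x
  end.

Definition next p l : option nat := epsilon (inhabits None) (nextP p l).

Lemma next_spec p l : is_pmf p -> nextP p l (next p l).
Proof.
  intro Hp. unfold next. apply epsilon_spec.
  destruct (classic (exists x, cand p l x)) as [H|H].
  - destruct (max_cand p l Hp H) as [x Hx]. exists (Some x). exact Hx.
  - exists None. exact H.
Qed.

Fixpoint hist p n : list nat :=
  match n with O => nil | S n' =>
    match next p (hist p n') with Some x => hist p n' ++ x :: nil | None => hist p n' end end.

Definition zf p k : nat := match next p (hist p k) with Some x => x | None => 0%nat end.
Definition defd p k : Prop := next p (hist p k) <> None.

Lemma defd_S p k : defd p (S k) -> defd p k.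
Proof.
  unfold defd. intros H Hn. apply H. simpl. rewrite Hn. exact Hn.
Qed.

Lemma defd_down p k i : defd p k -> (i <= k)%nat -> defd p i.
Proof. intros H Hle. induction Hle; auto. apply IHHle. apply defd_S; auto. Qed.

Lemma hist_map p k : (forall i, (i < k)%nat -> defd p i) -> hist p k = map (zf p) (seq 0 k).
Proof.
  induction k; intros H. reflexivity.
  rewrite seq_S, map_app. simpl. rewrite <- IHk by (intros; apply H; lia).
  assert (Hd := H k ltac:(lia)). unfold defd, zf in *.
  destruct (next p (hist p k)); [reflexivity|congruence].
Qed.

Lemma zf_spec p k : is_pmf p -> defd p k ->
  cand p (hist p k) (zf p k) /\ forall y, cand p (hist p k) y -> p y <= p (zf p k).
Proof.
  intros Hp Hd. pose proof (next_spec p (hist p k) Hp). unfold defd, zf in *.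
  destruct (next p (hist p k)); [exact H|congruence].
Qed.

Lemma hist_in p k i : defd p k -> (i < k)%nat -> In (zf p i) (hist p k).
Proof.
  intros Hd Hi. rewrite hist_map. apply in_map. apply in_seq. lia.
  intros j Hj. apply (defd_down p k); auto; lia.
Qed.

Lemma psum_lower f t K : (forall j, t <= f j) -> INR K * t <= psum f K.
Proof. intros H; induction K. simpl; lra. rewrite S_INR. simpl. specialize (H K). lra. Qed.

Lemma listing_exists p : is_pmf p -> exists L z, sorted_listing p L z.
Proof.
  intros Hp. pose proof Hp as [Hp0 Hs].
  assert (Hinj : forall k k', defd p k -> defd p k' -> zf p k = zf p k' -> k = k').
  { intros k k' Hk Hk' E. destruct (Nat.lt_total k k') as [Hl|[Hl|Hl]]; auto; exfalso.
    - destruct (zf_spec p k' Hp Hk') as [[_ Hn] _]. apply Hn. rewrite <- E. apply hist_in; auto.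
    - destruct (zf_spec p k Hp Hk) as [[_ Hn] _]. apply Hn. rewrite E. apply hist_in; auto. }
  assert (Hsort : forall k, defd p (S k) -> p (zf p (S k)) <= p (zf p k)).
  { intros k Hk. pose proof (defd_S p k Hk) as Hk0.
    destruct (zf_spec p (S k) Hp Hk) as [[H1 H2] _].
    apply (proj2 (zf_spec p k Hp Hk0)). split; auto. intro Hin. apply H2.
    simpl. destruct (next p (hist p k)); [apply in_or_app; auto| exact Hin]. }
  destruct (classic (forall k, defd p k)) as [Hall|Hnall].
  - exists None, (zf p). split; [|split; [|split]].
    + intros k _. apply (zf_spec p k Hp (Hall k)).
    + intros k k' _ _. apply Hinj; auto.
    + intros x Hx. apply NNPP. intro Hne.
      assert (Hge : forall k, p x <= p (zf p k)).
      { intro k. apply (zf_spec p k Hp (Hall k)). split; auto. intro Hin.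
        rewrite hist_map in Hin by auto. apply in_map_iff in Hin. destruct Hin as [i [Ei _]].
        apply Hne. exists i; split; [exact I|auto]. }
      destruct (archimed (1 / p x)) as [Har _].
      set (K := Z.to_nat (up (1 / p x))).
      assert (HK : 1 / p x < INR K).
      { unfold K. rewrite INR_IZR_INZ, Z2Nat.id. auto.
        apply le_IZR. assert (0 < 1 / p x) by (apply Rdiv_lt_0_compat; lra). lra. }
      assert (H1 : INR K * p x <= psum (fun j => p (zf p j)) K) by (apply psum_lower; auto).
      destruct (list_bound (map (zf p) (seq 0 K))) as [M HM].
      assert (H2 : psum (fun j => p (zf p j)) K <= psum p M).
      { rewrite !psum_lsum. apply lsum_le with (phi := zf p). apply seq_NoDup. auto.
        intros y Hy _. split; auto. apply in_seq. split; [lia|]. apply HM, in_map; auto.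
        intros; apply Hinj; auto. }
      pose proof (inf_sum_psum_le p 1 Hp0 Hs M).
      assert (INR K * p x > 1).
      { apply (Rmult_lt_compat_r (p x)) in HK; auto. unfold Rdiv in HK.
        rewrite Rmult_assoc, Rinv_l, Rmult_1_l in HK; lra. }
      lra.
    + intros k _. apply Hsort; auto.
  - assert (Hm : exists m, ~ defd p m /\ forall k, (k < m)%nat -> defd p k).
    { apply not_all_ex_not in Hnall. destruct Hnall as [m0 Hm0].
      induction m0 as [|m0 IH]. exists 0%nat; split; auto; intros; lia.
      destruct (classic (defd p m0)) as [Hd|Hd]; auto.
      exists (S m0); split; auto. intros k Hk. apply (defd_down p m0); auto; lia. }
    destruct Hm as [m [Hnm Hbel]].
    exists (Some m), (zf p). simpl. split; [|split; [|split]].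
    + intros k Hk. apply (zf_spec p k Hp (Hbel k Hk)).
    + intros k k' Hk Hk'. apply Hinj; auto.
    + intros x Hx. apply NNPP. intro Hne. apply Hnm.
      intro Hn. pose proof (next_spec p (hist p m) Hp) as Hsp. rewrite Hn in Hsp. apply Hsp.
      exists x. split; auto. intro Hin. rewrite hist_map in Hin by auto.
      apply in_map_iff in Hin. destruct Hin as [i [Ei Hi]]. apply in_seq in Hi.
      apply Hne. exists i; split; [simpl; lia|exact Ei].
    + intros k Hk. apply Hsort. auto.
Qed.


Definition idx (L : option nat) (z : nat -> nat) (x : nat) : nat :=
  epsilon (inhabits 0%nat) (fun k => in_range L k /\ z k = x).

Lemma SL_inj p L z : sorted_listing p L z -> inj_on L z.
Proof. intros [_ [H _]]. exact H. Qed.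

Lemma SL_surj p L z : is_pmf p -> sorted_listing p L z -> surj_on p L z.
Proof. intros [Hp _] [_ [_ [H _]]] b Hb. apply H. specialize (Hp b). lra. Qed.

Lemma SL_total p L z : is_pmf p -> sorted_listing p L z -> infinite_sum (relist p L z) 1.
Proof.
  intros Hp SL. apply rearr1. apply Hp. eapply SL_inj; eauto. eapply SL_surj; eauto. apply Hp.
Qed.

Lemma SL_mono p L z k i : sorted_listing p L z -> in_range L k -> (i <= k)%nat -> p (z k) <= p (z i).
Proof.
  intros [_ [_ [_ Hs]]] Hk Hle. induction Hle. lra.
  pose proof (Hs m Hk). assert (in_range L m) by (apply (in_range_down L (S m)); auto).
  specialize (IHHle H0). lra.
Qed.

Lemma idx_spec p L z x : sorted_listing p L z -> 0 < p x -> in_range L (idx L z x) /\ z (idx L z x) = x.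
Proof.
  intros [_ [_ [Hs _]]] Hx. unfold idx. apply (epsilon_spec (inhabits 0%nat) (fun k => in_range L k /\ z k = x)).
  apply Hs; auto.
Qed.

Lemma idx_z p L z k : sorted_listing p L z -> in_range L k -> idx L z (z k) = k.
Proof.
  intros SL Hk. pose proof SL as [Hpos [Hinj _]].
  destruct (idx_spec p L z (z k) SL (Hpos k Hk)) as [H1 H2]. apply Hinj; auto.
Qed.

Lemma relist_pos p L z k : (forall x, 0 <= p x) -> 0 < relist p L z k ->
  in_range L k /\ relist p L z k = p (z k).
Proof.
  unfold relist. intros Hp H. destruct (inr_b L k) eqn:E. split; auto. apply inr_b_spec; auto. lra.
Qed.

Lemma psum_pz p L z j : (forall i, (i < j)%nat -> in_range L i) ->
  psum (fun i => p (z i)) j = psum (relist p L z) j.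
Proof.
  induction j; intros H. reflexivity. simpl. rewrite IHj by (intros; apply H; lia).
  unfold relist. assert (inr_b L j = true) by (apply inr_b_spec, H; lia). rewrite H0. reflexivity.
Qed.

Lemma cval_of p L z k u : is_pmf p -> sorted_listing p L z ->
  psum (relist p L z) k <= u < psum (relist p L z) (S k) ->
  c_val p u (ln (/ p (z k))) /\ in_range L k.
Proof.
  intros [Hp _] SL Hu. simpl in Hu.
  assert (Hpos : 0 < relist p L z k) by lra.
  destruct (relist_pos p L z k Hp Hpos) as [Hk _].
  split; auto.
  exists L, z. split; auto. exists k. split; auto. split; auto.
  rewrite (psum_pz p L z k), (psum_pz p L z (S k)). simpl in *; lra.
  intros i Hi; apply (in_range_down L k); auto; lia.
  intros i Hi; apply (in_range_down L k); auto; lia.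
Qed.

Lemma one_side p L z L' w k m : (forall x, 0 <= p x) -> sorted_listing p L z -> sorted_listing p L' w ->
  in_range L k -> in_range L' m -> p (w m) < p (z k) ->
  psum (fun i => p (z i)) (S k) <= psum (fun i => p (w i)) m.
Proof.
  intros Hp SL1 SL2 Hk Hm Hlt. rewrite !psum_lsum.
  pose proof SL1 as [Hpos1 [Hinj1 _]].
  apply lsum_le with (phi := fun i => idx L' w (z i)).
  - apply seq_NoDup.
  - auto.
  - intros x Hx _. apply in_seq in Hx.
    assert (Hxr : in_range L x) by (apply (in_range_down L k); auto; lia).
    destruct (idx_spec p L' w (z x) SL2 (Hpos1 x Hxr)) as [H1 H2]. split; [|idtac].
    all: cycle 1. { cbv beta. rewrite H2. reflexivity. }
    apply in_seq. split; [lia|]. simpl.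
    destruct (Nat.lt_ge_cases (idx L' w (z x)) m); auto. exfalso.
    pose proof (SL_mono p L' w _ m SL2 H1 H). rewrite H2 in H0.
    pose proof (SL_mono p L z k x SL1 Hk ltac:(lia)). lra.
  - intros x y Hx Hy _ _ E. apply in_seq in Hx. apply in_seq in Hy.
    assert (Hxr : in_range L x) by (apply (in_range_down L k); auto; lia).
    assert (Hyr : in_range L y) by (apply (in_range_down L k); auto; lia).
    destruct (idx_spec p L' w (z x) SL2 (Hpos1 x Hxr)) as [_ H1].
    destruct (idx_spec p L' w (z y) SL2 (Hpos1 y Hyr)) as [_ H2].
    apply Hinj1; auto. rewrite <- H1, <- H2, E. reflexivity.
Qed.

Lemma cval_unique p d v1 v2 : is_pmf p -> c_val p d v1 -> c_val p d v2 -> v1 = v2.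
Proof.
  intros [Hp _] [L [z [SL1 [k [Hk [[H1 H2] E1]]]]]] [L' [w [SL2 [m [Hm [[H3 H4] E2]]]]]].
  subst. f_equal. f_equal.
  destruct (Rtotal_order (p (z k)) (p (w m))) as [Hl|[He|Hl]]; auto; exfalso.
  - pose proof (one_side p L' w L z m k Hp SL2 SL1 Hm Hk Hl). lra.
  - pose proof (one_side p L z L' w k m Hp SL1 SL2 Hk Hm Hl). lra.
Qed.

Lemma cfun_eq p L z k u : is_pmf p -> sorted_listing p L z ->
  psum (relist p L z) k <= u < psum (relist p L z) (S k) ->
  cfun p u = ln (/ p (z k)).
Proof.
  intros Hp SL Hu. destruct (cval_of p L z k u Hp SL Hu) as [Hc _].
  apply (cval_unique p u); auto. unfold cfun. apply epsilon_spec. eauto.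
Qed.


Definition ov (a1 a2 b1 b2 : R) : R := Rmax 0 (Rmin a2 b2 - Rmax a1 b1).

Ltac mm := repeat match goal with
 | |- context [Rmax ?a ?b] => let H := fresh in destruct (Rle_lt_dec a b) as [H|H];
      [rewrite (Rmax_right a b) in * by lra | rewrite (Rmax_left a b) in * by lra]; try (exfalso; lra)
 | |- context [Rmin ?a ?b] => let H := fresh in destruct (Rle_lt_dec a b) as [H|H];
      [rewrite (Rmin_left a b) in * by lra | rewrite (Rmin_right a b) in * by lra]; try (exfalso; lra)
 | |- context [Rabs ?a] => let H := fresh in destruct (Rle_lt_dec 0 a) as [H|H];
      [rewrite (Rabs_right a) in * by lra | rewrite (Rabs_left a) in * by lra]; try (exfalso; lra)
 | _ : context [Rmax ?a ?b] |- _ => let H := fresh in destruct (Rle_lt_dec a b) as [H|H];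
      [rewrite (Rmax_right a b) in * by lra | rewrite (Rmax_left a b) in * by lra]; try (exfalso; lra)
 | _ : context [Rmin ?a ?b] |- _ => let H := fresh in destruct (Rle_lt_dec a b) as [H|H];
      [rewrite (Rmin_left a b) in * by lra | rewrite (Rmin_right a b) in * by lra]; try (exfalso; lra)
 | _ : context [Rabs ?a] |- _ => let H := fresh in destruct (Rle_lt_dec 0 a) as [H|H];
      [rewrite (Rabs_right a) in * by lra | rewrite (Rabs_left a) in * by lra]; try (exfalso; lra)
 end; lra.

Lemma ov_nonneg a1 a2 b1 b2 : 0 <= ov a1 a2 b1 b2.
Proof. unfold ov. apply Rmax_l. Qed.

Lemma ov_sym a1 a2 b1 b2 : ov a1 a2 b1 b2 = ov b1 b2 a1 a2.
Proof. unfold ov. rewrite (Rmin_comm a2 b2), (Rmax_comm a1 b1). reflexivity. Qed.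

Lemma ov_add a1 a2 b c d : b <= c -> c <= d -> ov a1 a2 b c + ov a1 a2 c d = ov a1 a2 b d.
Proof. intros. unfold ov. mm. Qed.

Lemma ov_empty a1 a2 b : ov a1 a2 b b = 0.
Proof. unfold ov. mm. Qed.

Lemma ov_empty1 a b1 b2 : ov a a b1 b2 = 0.
Proof. unfold ov. mm. Qed.

Lemma ov_le a1 a2 b1 b2 : a1 <= a2 -> ov a1 a2 b1 b2 <= a2 - a1.
Proof. intros. unfold ov. mm. Qed.

Lemma ov_lip a1 a2 b c c' : Rabs (ov a1 a2 b c - ov a1 a2 b c') <= Rabs (c - c').
Proof. unfold ov. mm. Qed.

Lemma ov_tele a1 a2 (T : nat -> R) M : (forall m, T m <= T (S m)) ->
  psum (fun m => ov a1 a2 (T m) (T (S m))) M = ov a1 a2 (T 0%nat) (T M).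
Proof.
  intros HT. induction M. simpl. rewrite ov_empty. reflexivity.
  simpl. rewrite IHM. apply ov_add; auto.
  clear IHM. induction M. lra. specialize (HT M). lra.
Qed.

Lemma rowtot X1 X2 e : 0 <= X1 -> X1 <= X2 -> X2 <= 1 -> 0 < e < 1 ->
  ov (Rmax X1 e) (Rmax X2 e) (0 + e) (1 + e) + ov (Rmin X1 e) (Rmin X2 e) (0 + (e - 1)) (1 + (e - 1)) = X2 - X1.
Proof. intros. unfold ov. mm. Qed.

Lemma coltot Y1 Y2 e : 0 <= Y1 -> Y1 <= Y2 -> Y2 <= 1 -> 0 < e < 1 ->
  ov (Rmax 0 e) (Rmax 1 e) (Y1 + e) (Y2 + e) + ov (Rmin 0 e) (Rmin 1 e) (Y1 + (e - 1)) (Y2 + (e - 1)) = Y2 - Y1.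
Proof. intros. unfold ov. mm. Qed.

Lemma ov_lip_max a x y e c d : Rabs (ov a (Rmax x e) c d - ov a (Rmax y e) c d) <= Rabs (x - y).
Proof. unfold ov. mm. Qed.

Lemma ov_lip_min a x y e c d : Rabs (ov a (Rmin x e) c d - ov a (Rmin y e) c d) <= Rabs (x - y).
Proof. unfold ov. mm. Qed.


Lemma psum_plus f g M : psum (fun i => f i + g i) M = psum f M + psum g M.
Proof. induction M; simpl; [lra|rewrite IHM; lra]. Qed.

Lemma psum_ext f g M : (forall i, f i = g i) -> psum f M = psum g M.
Proof. intro H; induction M; simpl; [lra|rewrite IHM, H; lra]. Qed.

Lemma inf_sum_ext f g s : (forall i, f i = g i) -> infinite_sum f s -> infinite_sum g s.
Proof.
  intros H Hs e He. destruct (Hs e He) as [N HN]. exists N. intros n Hn.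
  rewrite <- (sum_eq f g n) by auto. auto.
Qed.

Lemma inf_sum_zero g : (forall i, g i = 0) -> infinite_sum g 0.
Proof.
  intros H e He. exists 0%nat. intros n _. rewrite sum_f_R0_psum, (psum_ext g (fun _ => 0)) by auto.
  assert (forall M, psum (fun _ => 0) M = 0) as ->. { induction M; simpl; [lra|rewrite IHM; lra]. }
  unfold R_dist. rewrite Rminus_0_r, Rabs_R0. lra.
Qed.

Lemma lim_via u g F : infinite_sum u 1 -> (forall M, psum g M = F (psum u M)) ->
  (forall y, Rabs (F y - F 1) <= 2 * Rabs (y - 1)) -> infinite_sum g (F 1).
Proof.
  intros Hu HG HF e He. destruct (Hu (e/2)) as [N HN]. lra. exists N. intros n Hn.
  specialize (HN n Hn). unfold R_dist in *. rewrite sum_f_R0_psum in *. rewrite HG.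
  specialize (HF (psum u (S n))). lra.
Qed.

Definition XX (p : nat -> R) L z k := psum (relist p L z) k.

Definition Am px py Lx zx Ly zy e k m :=
  ov (Rmax (XX px Lx zx k) e) (Rmax (XX px Lx zx (S k)) e) (XX py Ly zy m + e) (XX py Ly zy (S m) + e).
Definition Bm px py Lx zx Ly zy e k m :=
  ov (Rmin (XX px Lx zx k) e) (Rmin (XX px Lx zx (S k)) e) (XX py Ly zy m + (e - 1)) (XX py Ly zy (S m) + (e - 1)).

Definition qc px py Lx zx Ly zy e a b :=
  if Rlt_dec 0 (px a) then if Rlt_dec 0 (py b) then
    Am px py Lx zx Ly zy e (idx Lx zx a) (idx Ly zy b) + Bm px py Lx zx Ly zy e (idx Lx zx a) (idx Ly zy b)
  else 0 else 0.

Lemma XX_S p L z k : XX p L z (S k) = XX p L z k + relist p L z k.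
Proof. reflexivity. Qed.

Lemma XX_mono p L z k : (forall x, 0 <= p x) -> XX p L z k <= XX p L z (S k).
Proof. intros. rewrite XX_S. pose proof (relist_nonneg p L z k H). lra. Qed.

Lemma XX_nonneg p L z k : (forall x, 0 <= p x) -> 0 <= XX p L z k.
Proof. intros. apply psum_nonneg. intros; apply relist_nonneg; auto. Qed.

Lemma XX_le1 p L z k : is_pmf p -> sorted_listing p L z -> XX p L z k <= 1.
Proof. intros Hp SL. apply inf_sum_psum_le. intros; apply relist_nonneg, Hp. apply SL_total; auto. Qed.

Lemma XX_out p L z k : inr_b L k = false -> XX p L z (S k) = XX p L z k.
Proof. intros. rewrite XX_S. unfold relist. rewrite H. lra. Qed.

Lemma relist_idx p L z a : sorted_listing p L z -> 0 < p a -> relist p L z (idx L z a) = p a.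
Proof.
  intros SL Ha. destruct (idx_spec p L z a SL Ha) as [H1 H2]. unfold relist.
  apply inr_b_spec in H1. rewrite H1, H2. reflexivity.
Qed.

Lemma Rmax_mono x y e : x <= y -> Rmax x e <= Rmax y e.
Proof. intros. unfold Rmax. destruct Rle_dec; destruct Rle_dec; lra. Qed.
Lemma Rmin_mono x y e : x <= y -> Rmin x e <= Rmin y e.
Proof. intros. unfold Rmin. destruct Rle_dec; destruct Rle_dec; lra. Qed.

Lemma qc_nonneg px py Lx zx Ly zy e a b : 0 <= qc px py Lx zx Ly zy e a b.
Proof.
  unfold qc, Am, Bm. destruct Rlt_dec; [destruct Rlt_dec|]; try lra.
  pose proof (ov_nonneg (Rmax (XX px Lx zx (idx Lx zx a)) e) (Rmax (XX px Lx zx (S (idx Lx zx a))) e)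
    (XX py Ly zy (idx Ly zy b) + e) (XX py Ly zy (S (idx Ly zy b)) + e)).
  pose proof (ov_nonneg (Rmin (XX px Lx zx (idx Lx zx a)) e) (Rmin (XX px Lx zx (S (idx Lx zx a))) e)
    (XX py Ly zy (idx Ly zy b) + (e - 1)) (XX py Ly zy (S (idx Ly zy b)) + (e - 1))). lra.
Qed.

Lemma ov_tele1 (T : nat -> R) b1 b2 K : (forall k, T k <= T (S k)) ->
  psum (fun k => ov (T k) (T (S k)) b1 b2) K = ov (T 0%nat) (T K) b1 b2.
Proof.
  intros. rewrite (psum_ext _ (fun k => ov b1 b2 (T k) (T (S k)))) by (intro; apply ov_sym).
  rewrite ov_tele by auto. apply ov_sym.
Qed.

Lemma coupling_ok px py Lx zx Ly zy e : is_pmf px -> is_pmf py ->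
  sorted_listing px Lx zx -> sorted_listing py Ly zy -> 0 < e < 1 ->
  is_coupling px py (qc px py Lx zx Ly zy e).
Proof.
  intros Hx Hy SLx SLy He. pose proof Hx as [Hx0 _]. pose proof Hy as [Hy0 _].
  split; [|split].
  - intros; apply qc_nonneg.
  - intro a. destruct (Rlt_dec 0 (px a)) as [Ha|Ha].
    2:{ assert (px a = 0) as -> by (specialize (Hx0 a); lra). apply inf_sum_zero. intro b.
        unfold qc. destruct Rlt_dec; [contradiction|reflexivity]. }
    set (k := idx Lx zx a).
    apply rearr2 with Ly zy.
    + intros; apply qc_nonneg.
    + eapply SL_inj; eauto.
    + intros b Hb. apply SLy. unfold qc in Hb. destruct Rlt_dec; [|now elim Hb]. destruct Rlt_dec; [auto|now elim Hb].
    + apply inf_sum_ext with (fun m => Am px py Lx zx Ly zy e k m + Bm px py Lx zx Ly zy e k m).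
      { intro m. unfold relist. destruct (inr_b Ly m) eqn:E.
        - assert (Hm : in_range Ly m) by (apply inr_b_spec; auto).
          pose proof (proj1 SLy m Hm). unfold qc. destruct Rlt_dec; [|contradiction].
          destruct Rlt_dec; [|contradiction]. rewrite (idx_z py Ly zy m SLy Hm). reflexivity.
        - unfold Am, Bm. rewrite (XX_out py Ly zy m E). rewrite !ov_empty. lra. }
      replace (px a) with (ov (Rmax (XX px Lx zx k) e) (Rmax (XX px Lx zx (S k)) e) (0 + e) (1 + e) +
        ov (Rmin (XX px Lx zx k) e) (Rmin (XX px Lx zx (S k)) e) (0 + (e - 1)) (1 + (e - 1))).
      2:{ rewrite rowtot; auto. rewrite XX_S. unfold k. rewrite relist_idx; auto. lra.
          apply XX_nonneg; auto. apply XX_mono; auto. apply XX_le1; auto. }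
      apply (lim_via (relist py Ly zy) _ (fun y =>
        ov (Rmax (XX px Lx zx k) e) (Rmax (XX px Lx zx (S k)) e) (0 + e) (y + e) +
        ov (Rmin (XX px Lx zx k) e) (Rmin (XX px Lx zx (S k)) e) (0 + (e - 1)) (y + (e - 1)))).
      * apply SL_total; auto.
      * intro M. rewrite psum_plus. unfold Am, Bm.
        rewrite (ov_tele _ _ (fun m => XX py Ly zy m + e)), (ov_tele _ _ (fun m => XX py Ly zy m + (e - 1))).
        reflexivity.
        intro m; pose proof (XX_mono py Ly zy m Hy0); lra.
        intro m; pose proof (XX_mono py Ly zy m Hy0); lra.
      * intro y. cbv beta.
        pose proof (ov_lip (Rmax (XX px Lx zx k) e) (Rmax (XX px Lx zx (S k)) e) (0 + e) (y + e) (1 + e)).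
        pose proof (ov_lip (Rmin (XX px Lx zx k) e) (Rmin (XX px Lx zx (S k)) e) (0 + (e - 1)) (y + (e - 1)) (1 + (e - 1))).
        replace (y + e - (1 + e)) with (y - 1) in H by ring.
        replace (y + (e - 1) - (1 + (e - 1))) with (y - 1) in H0 by ring.
        set (u1 := ov _ _ _ (y + e)) in *. set (u2 := ov _ _ _ (1 + e)) in *.
        set (u3 := ov _ _ _ (y + (e - 1))) in *. set (u4 := ov _ _ _ (1 + (e - 1))) in *.
        revert H H0. unfold Rabs. repeat destruct Rcase_abs; lra.
  - intro b. destruct (Rlt_dec 0 (py b)) as [Hb|Hb].
    2:{ assert (py b = 0) as -> by (specialize (Hy0 b); lra). apply inf_sum_zero. intro a.
        unfold qc. destruct Rlt_dec; [|reflexivity]. destruct Rlt_dec; [contradiction|reflexivity]. }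
    set (m := idx Ly zy b).
    apply rearr2 with Lx zx.
    + intros; apply qc_nonneg.
    + eapply SL_inj; eauto.
    + intros a Ha. apply SLx. unfold qc in Ha. destruct Rlt_dec; [auto|now elim Ha].
    + apply inf_sum_ext with (fun k => Am px py Lx zx Ly zy e k m + Bm px py Lx zx Ly zy e k m).
      { intro k. unfold relist. destruct (inr_b Lx k) eqn:E.
        - assert (Hk : in_range Lx k) by (apply inr_b_spec; auto).
          pose proof (proj1 SLx k Hk). unfold qc. destruct Rlt_dec; [|contradiction].
          destruct Rlt_dec; [|contradiction]. rewrite (idx_z px Lx zx k SLx Hk). reflexivity.
        - unfold Am, Bm. rewrite (XX_out px Lx zx k E). rewrite !ov_empty1. lra. }
      replace (py b) with (ov (Rmax 0 e) (Rmax 1 e) (XX py Ly zy m + e) (XX py Ly zy (S m) + e) +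
        ov (Rmin 0 e) (Rmin 1 e) (XX py Ly zy m + (e - 1)) (XX py Ly zy (S m) + (e - 1))).
      2:{ rewrite coltot; auto. rewrite XX_S. unfold m. rewrite relist_idx; auto. lra.
          apply XX_nonneg; auto. apply XX_mono; auto. apply XX_le1; auto. }
      apply (lim_via (relist px Lx zx) _ (fun x =>
        ov (Rmax 0 e) (Rmax x e) (XX py Ly zy m + e) (XX py Ly zy (S m) + e) +
        ov (Rmin 0 e) (Rmin x e) (XX py Ly zy m + (e - 1)) (XX py Ly zy (S m) + (e - 1)))).
      * apply SL_total; auto.
      * intro K. rewrite psum_plus. unfold Am, Bm.
        rewrite (ov_tele1 (fun k => Rmax (XX px Lx zx k) e)), (ov_tele1 (fun k => Rmin (XX px Lx zx k) e)).
        reflexivity.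
        intro k; apply Rmin_mono, XX_mono; auto.
        intro k; apply Rmax_mono, XX_mono; auto.
      * intro x. cbv beta.
        pose proof (ov_lip_max (Rmax 0 e) x 1 e (XX py Ly zy m + e) (XX py Ly zy (S m) + e)).
        pose proof (ov_lip_min (Rmin 0 e) x 1 e (XX py Ly zy m + (e - 1)) (XX py Ly zy (S m) + (e - 1))).
        set (u1 := ov _ (Rmax x e) _ _) in *. set (u2 := ov _ (Rmax 1 e) _ _) in *.
        set (u3 := ov _ (Rmin x e) _ _) in *. set (u4 := ov _ (Rmin 1 e) _ _) in *.
        revert H H0. unfold Rabs. repeat destruct Rcase_abs; lra.
Qed.


Lemma psum_le f g N : (forall i, f i <= g i) -> psum f N <= psum g N.
Proof. intro H; induction N; simpl; [lra|]. specialize (H N); lra. Qed.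

Lemma psum_tele (T : nat -> R) K : psum (fun k => T (S k) - T k) K = T K - T 0%nat.
Proof. induction K; simpl; [lra|]. rewrite IHK. lra. Qed.

Lemma inf_sum_nonneg f s : (forall i, 0 <= f i) -> infinite_sum f s -> 0 <= s.
Proof.
  intros Hf Hs. destruct (Rle_dec 0 s) as [?|Hn]; auto. exfalso.
  destruct (Hs (- s)) as [N HN]. lra. specialize (HN N (le_n _)).
  rewrite sum_f_R0_psum in HN. pose proof (psum_nonneg f (S N) Hf).
  unfold R_dist, Rabs in HN. destruct Rcase_abs; lra.
Qed.

Lemma ov_pos_point a1 a2 b1 b2 : 0 < ov a1 a2 b1 b2 ->
  a1 <= Rmax a1 b1 /\ b1 <= Rmax a1 b1 /\ Rmax a1 b1 < a2 /\ Rmax a1 b1 < b2.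
Proof.
  unfold ov. intro H. split; [apply Rmax_l|split; [apply Rmax_r|]].
  revert H. unfold Rmax, Rmin. repeat destruct Rle_dec; intros; split; lra.
Qed.

Lemma lt_Rmax_e u x e : e <= u -> u < Rmax x e -> u < x.
Proof. unfold Rmax. destruct Rle_dec; lra. Qed.

Definition Bq px py Lx zx Ly zy e a b :=
  if Rlt_dec 0 (px a) then if Rlt_dec 0 (py b) then
    Bm px py Lx zx Ly zy e (idx Lx zx a) (idx Ly zy b) else 0 else 0.

Definition Ev px py Lx zx Ly zy e gamma a b :=
  if Rlt_dec (ln (/ px a) - ln (/ py b)) (- gamma) then qc px py Lx zx Ly zy e a b else 0.

Lemma Bq_nonneg px py Lx zx Ly zy e a b : 0 <= Bq px py Lx zx Ly zy e a b.
Proof. unfold Bq, Bm. repeat destruct Rlt_dec; try lra. apply ov_nonneg. Qed.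

Lemma Ev_nonneg px py Lx zx Ly zy e gamma a b : 0 <= Ev px py Lx zx Ly zy e gamma a b.
Proof. unfold Ev. destruct Rlt_dec. apply qc_nonneg. lra. Qed.

Lemma Ev_le px py Lx zx Ly zy e eta gamma a b : is_pmf px -> is_pmf py ->
  sorted_listing px Lx zx -> sorted_listing py Ly zy -> 0 < e < 1 -> eta <= gamma ->
  (forall d, 0 <= d < 1 - e -> cfun px (d + e) - cfun py d >= - eta) ->
  Ev px py Lx zx Ly zy e gamma a b <= Bq px py Lx zx Ly zy e a b.
Proof.
  intros Hx Hy SLx SLy He Heta Good. pose proof Hx as [Hx0 _]. pose proof Hy as [Hy0 _].
  unfold Ev. destruct Rlt_dec as [Hev|Hev]; [|apply Bq_nonneg].
  unfold qc, Bq. destruct (Rlt_dec 0 (px a)) as [Ha|Ha]; [|lra].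
  destruct (Rlt_dec 0 (py b)) as [Hb|Hb]; [|lra].
  set (k := idx Lx zx a). set (m := idx Ly zy b).
  enough (Am px py Lx zx Ly zy e k m <= 0) by lra.
  destruct (Rle_dec (Am px py Lx zx Ly zy e k m) 0) as [?|Hn]; auto. exfalso.
  apply Rnot_le_lt in Hn. unfold Am in Hn. apply ov_pos_point in Hn.
  set (u := Rmax (Rmax (XX px Lx zx k) e) (XX py Ly zy m + e)) in *.
  destruct Hn as [H1 [H2 [H3 H4]]].
  assert (Hek : e <= u) by (pose proof (Rmax_r (XX px Lx zx k) e); lra).
  assert (Hxk : XX px Lx zx k <= u) by (pose proof (Rmax_l (XX px Lx zx k) e); lra).
  apply lt_Rmax_e in H3; auto.
  assert (C1 : cfun px u = ln (/ px a)).
  { rewrite (cfun_eq px Lx zx k u Hx SLx). unfold k. rewrite (proj2 (idx_spec px Lx zx a SLx Ha)). reflexivity.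
    unfold XX in *. split; auto. }
  assert (C2 : cfun py (u - e) = ln (/ py b)).
  { rewrite (cfun_eq py Ly zy m (u - e) Hy SLy). unfold m. rewrite (proj2 (idx_spec py Ly zy b SLy Hb)). reflexivity.
    unfold XX in *. split; lra. }
  assert (Hd : 0 <= u - e < 1 - e).
  { pose proof (XX_nonneg py Ly zy m Hy0). pose proof (XX_le1 px Lx zx (S k) Hx SLx). split; lra. }
  specialize (Good (u - e) Hd). replace (u - e + e) with u in Good by ring. lra.
Qed.

Lemma event_ok px py Lx zx Ly zy e eta gamma : is_pmf px -> is_pmf py ->
  sorted_listing px Lx zx -> sorted_listing py Ly zy -> 0 < e < 1 -> eta <= gamma ->
  (forall d, 0 <= d < 1 - e -> cfun px (d + e) - cfun py d >= - eta) ->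
  exists s, event_prob px py (qc px py Lx zx Ly zy e) gamma s /\ s <= e.
Proof.
  intros Hx Hy SLx SLy He Heta Good. pose proof Hx as [Hx0 _]. pose proof Hy as [Hy0 _].
  set (Wk := fun k => Rmin (XX px Lx zx (S k)) e - Rmin (XX px Lx zx k) e).
  assert (HWk : forall k, 0 <= Wk k) by (intro k; unfold Wk; pose proof (Rmin_mono _ _ e (XX_mono px Lx zx k Hx0)); lra).
  set (w := fun a => if Rlt_dec 0 (px a) then Wk (idx Lx zx a) else 0).
  assert (Hw : forall a, 0 <= w a) by (intro a; unfold w; destruct Rlt_dec; auto; lra).
  set (E := Ev px py Lx zx Ly zy e gamma).
  assert (Hrow : forall a, exists s, infinite_sum (E a) s /\ s <= w a).
  { intro a. apply exists_sum. intro; apply Ev_nonneg.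
    intro N. apply Rle_trans with (psum (Bq px py Lx zx Ly zy e a) N).
    { apply psum_le. intro b. apply (Ev_le px py Lx zx Ly zy e eta gamma); auto. }
    unfold w. destruct (Rlt_dec 0 (px a)) as [Ha|Ha].
    2:{ rewrite (psum_ext _ (fun _ => 0)). induction N; simpl; lra.
        intro b. unfold Bq. destruct Rlt_dec; [contradiction|reflexivity]. }
    set (k := idx Lx zx a).
    destruct (exists_sum (Bm px py Lx zx Ly zy e k) (Wk k)) as [sB [HsB HsBle]].
    { intro; apply ov_nonneg. }
    { intro M. unfold Bm. rewrite (ov_tele _ _ (fun m => XX py Ly zy m + (e - 1))).
      apply ov_le. apply Rmin_mono, XX_mono; auto.
      intro m; pose proof (XX_mono py Ly zy m Hy0); lra. }
    assert (HB : infinite_sum (Bq px py Lx zx Ly zy e a) sB).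
    { apply rearr2 with Ly zy. intro; apply Bq_nonneg. eapply SL_inj; eauto.
      intros b Hb. apply SLy. unfold Bq in Hb. destruct Rlt_dec; [|now elim Hb].
      destruct Rlt_dec; [auto|now elim Hb].
      apply inf_sum_ext with (Bm px py Lx zx Ly zy e k); auto.
      intro m. unfold relist. destruct (inr_b Ly m) eqn:E0.
      - assert (Hm : in_range Ly m) by (apply inr_b_spec; auto).
        pose proof (proj1 SLy m Hm). unfold Bq. destruct Rlt_dec; [|contradiction].
        destruct Rlt_dec; [|contradiction]. rewrite (idx_z py Ly zy m SLy Hm). reflexivity.
      - unfold Bm. rewrite (XX_out py Ly zy m E0). apply ov_empty. }
    pose proof (inf_sum_psum_le _ sB (fun b => Bq_nonneg px py Lx zx Ly zy e a b) HB N). lra. }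
  set (r := fun a => epsilon (inhabits 0) (fun s => infinite_sum (E a) s /\ s <= w a)).
  assert (Hr : forall a, infinite_sum (E a) (r a) /\ r a <= w a).
  { intro a. unfold r. apply epsilon_spec. apply Hrow. }
  destruct (exists_sum Wk e HWk) as [sW [HsW HsWle]].
  { intro K. unfold Wk. rewrite (psum_tele (fun k => Rmin (XX px Lx zx k) e)).
    pose proof (XX_nonneg px Lx zx K Hx0). simpl.
    change (XX px Lx zx 0) with 0. unfold Rmin. repeat destruct Rle_dec; lra. }
  assert (Hwsum : infinite_sum w sW).
  { apply rearr2 with Lx zx; auto. eapply SL_inj; eauto.
    intros a Ha. apply SLx. unfold w in Ha. destruct Rlt_dec; [auto|now elim Ha].
    apply inf_sum_ext with Wk; auto.
    intro k. unfold relist. destruct (inr_b Lx k) eqn:E0.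
    - assert (Hk : in_range Lx k) by (apply inr_b_spec; auto).
      pose proof (proj1 SLx k Hk). unfold w. destruct Rlt_dec; [|contradiction].
      rewrite (idx_z px Lx zx k SLx Hk). reflexivity.
    - unfold Wk. rewrite (XX_out px Lx zx k E0). ring. }
  destruct (exists_sum r e) as [s [Hs Hsle]].
  { intro a. apply (inf_sum_nonneg (E a)). intro; apply Ev_nonneg. apply Hr. }
  { intro M. apply Rle_trans with (psum w M). apply psum_le. intro; apply Hr.
    pose proof (inf_sum_psum_le w sW Hw Hwsum M). lra. }
  exists s. split; auto. exists r. split; auto. intro a. apply Hr.
Qed.


Definition listing_of (p : nat -> R) : option nat * (nat -> nat) :=
  epsilon (inhabits (None, fun _ : nat => 0%nat)) (fun lz => sorted_listing p (fst lz) (snd lz)).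

Lemma listing_of_spec p : is_pmf p -> sorted_listing p (fst (listing_of p)) (snd (listing_of p)).
Proof.
  intro Hp. unfold listing_of.
  apply (epsilon_spec (inhabits (None, fun _ : nat => 0%nat)) (fun lz => sorted_listing p (fst lz) (snd lz))).
  destruct (listing_exists p Hp) as [L [z H]]. exists (L, z). exact H.
Qed.

Definition Good (px py : nat -> R) (e eta : R) : Prop :=
  forall d, 0 <= d < 1 - e -> cfun px (d + e) - cfun py d >= - eta.

Definition epsk (k : nat) : R := / (INR k + 2).
Definition etak (k : nat) : R := / (INR k + 1).

Lemma epsk_bounds k : 0 < epsk k < 1.
Proof.
  unfold epsk. pose proof (pos_INR k). split. apply Rinv_0_lt_compat; lra.
  rewrite <- Rinv_1. apply Rinv_lt_contravar; lra.
Qed.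

Lemma etak_pos k : 0 < etak k.
Proof. unfold etak. pose proof (pos_INR k). apply Rinv_0_lt_compat; lra. Qed.

Lemma epsk_le_etak k : epsk k <= etak k.
Proof. unfold epsk, etak. pose proof (pos_INR k). apply Rinv_le_contravar; lra. Qed.

Lemma etak_anti j k : (j <= k)%nat -> etak k <= etak j.
Proof. intros. unfold etak. pose proof (pos_INR j). apply le_INR in H. apply Rinv_le_contravar; lra. Qed.
Lemma epsk_anti j k : (j <= k)%nat -> epsk k <= epsk j.
Proof. intros. unfold epsk. pose proof (pos_INR j). apply le_INR in H. apply Rinv_le_contravar; lra. Qed.

Lemma etak_small c : 0 < c -> exists j, etak j <= c.
Proof.
  intros Hc. destruct (archimed (/ c)) as [Har _].
  assert (Hic : 0 < / c) by (apply Rinv_0_lt_compat; auto).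
  exists (Z.to_nat (up (/ c))).
  assert (HK : / c < INR (Z.to_nat (up (/ c)))).
  { rewrite INR_IZR_INZ, Z2Nat.id. auto. apply le_IZR. lra. }
  pose proof (pos_INR (Z.to_nat (up (/ c)))). unfold etak.
  assert (/ (INR (Z.to_nat (up (/ c))) + 1) < / / c).
  { apply Rinv_lt_contravar. apply Rmult_lt_0_compat; lra. lra. }
  rewrite Rinv_inv in H0. lra.
Qed.

Fixpoint Mf (N : nat -> nat) (k : nat) : nat :=
  match k with O => N O | S k' => Nat.max (Mf N k') (N (S k')) end.

Lemma Mf_ge N k : (N k <= Mf N k)%nat.
Proof. destruct k; simpl; lia. Qed.

Lemma Mf_mono N i j : (i <= j)%nat -> (Mf N i <= Mf N j)%nat.
Proof. intro H; induction H; simpl; lia. Qed.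

Fixpoint kk (M : nat -> nat) (n j : nat) : nat :=
  match j with O => O | S j' => if Nat.leb (M (S j')) n then S j' else kk M n j' end.

Lemma kk_ok M n j : (M 0%nat <= n)%nat -> (M (kk M n j) <= n)%nat.
Proof.
  intro H0. induction j; simpl; auto. destruct (Nat.leb (M (S j)) n) eqn:E; auto.
  apply Nat.leb_le; auto.
Qed.

Lemma kk_ge M n j j' : (j' <= j)%nat -> (M j' <= n)%nat -> (j' <= kk M n j)%nat.
Proof.
  induction j; intros H1 H2; simpl. lia.
  destruct (Nat.leb (M (S j)) n) eqn:E. auto.
  apply Nat.leb_gt in E. assert (j' <> S j) by (intro; subst; lia). apply IHj; auto. lia.
Qed.

Theorem lemma8 (PX PY : nat -> nat -> R)
  (hX : forall n, is_pmf (PX n)) (hY : forall n, is_pmf (PY n))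
  (hyp : forall eps, 0 < eps < 1 ->
     (* liminf_n inf_{0<=delta<1-eps} (c_n^x(delta+eps) - c_n^y(delta)) >= 0 *)
     forall eta, 0 < eta -> exists N, forall n, (N <= n)%nat ->
       forall delta, 0 <= delta < 1 - eps ->
         cfun (PX n) (delta + eps) - cfun (PY n) delta >= - eta) :
  exists Q : nat -> nat -> nat -> R,
    (forall n, is_coupling (PX n) (PY n) (Q n)) /\
    forall gamma, 0 < gamma ->
      forall e, 0 < e -> exists N, forall n, (N <= n)%nat ->
        exists s, event_prob (PX n) (PY n) (Q n) gamma s /\ s <= e.
Proof.
  set (Nk := fun k => epsilon (inhabits 0%nat)
     (fun N => forall n, (N <= n)%nat -> Good (PX n) (PY n) (epsk k) (etak k))).
  assert (HNk : forall k n, (Nk k <= n)%nat -> Good (PX n) (PY n) (epsk k) (etak k)).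
  { intro k. unfold Nk.
    apply (epsilon_spec (inhabits 0%nat) (fun N => forall n, (N <= n)%nat -> Good (PX n) (PY n) (epsk k) (etak k))).
    destruct (hyp (epsk k) (epsk_bounds k) (etak k) (etak_pos k)) as [N HN].
    exists N. intros n Hn d Hd. apply HN; auto. }
  set (Kn := fun n => kk (Mf Nk) n n).
  set (en := fun n => epsk (Kn n)).
  exists (fun n => qc (PX n) (PY n) (fst (listing_of (PX n))) (snd (listing_of (PX n)))
                   (fst (listing_of (PY n))) (snd (listing_of (PY n))) (en n)).
  split.
  - intro n. apply coupling_ok; auto; try apply listing_of_spec; auto. apply epsk_bounds.
  - intros gamma Hg e0 He0.
    destruct (etak_small (Rmin gamma e0)) as [j Hj]. unfold Rmin; destruct Rle_dec; lra.
    exists (Nat.max j (Mf Nk j)). intros n Hn.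
    assert (HK1 : (j <= Kn n)%nat).
    { unfold Kn. apply kk_ge; lia. }
    assert (HK2 : (Mf Nk (Kn n) <= n)%nat).
    { unfold Kn. apply kk_ok. pose proof (Mf_mono Nk 0 j ltac:(lia)). lia. }
    assert (HG : Good (PX n) (PY n) (epsk (Kn n)) (etak (Kn n))).
    { apply HNk. pose proof (Mf_ge Nk (Kn n)). lia. }
    pose proof (Rmin_l gamma e0). pose proof (Rmin_r gamma e0).
    pose proof (etak_anti j (Kn n) HK1). pose proof (epsk_anti j (Kn n) HK1).
    pose proof (epsk_le_etak j).
    destruct (event_ok (PX n) (PY n) (fst (listing_of (PX n))) (snd (listing_of (PX n)))
                   (fst (listing_of (PY n))) (snd (listing_of (PY n))) (en n) (etak (Kn n)) gamma)
      as [s [Hs Hsle]]; auto; try apply listing_of_spec; auto.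
    + apply epsk_bounds.
    + lra.
    + exists s. split; auto. unfold en in Hsle. lra.
Qed.
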